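(* Let $x$ be an element of a commutative ring $R$, $U$ a variable, $M$ an $R$-module and $\hat{M}^{xR}=\varprojlim_n M/x^nM$ its $xR$-adic completion. Then: (a) $H_0(x-U;M[[U]])\cong M[[U]]/(x-U)M[[U]]$, and the map $\sum_{i\ge0}m_iU^i\mapsto\big(\sum_{i<n}x^im_i+x^nM\big)_{n}$ induces an epimorphism $M[[U]]/(x-U)M[[U]]\twoheadrightarrow\hat{M}^{xR}$. (b) $H_1(x-U;M[[U]])\cong\ker\big(\operatorname{Hom}_R(R_x,M)\to M\big)$, where the map sends $\varphi$ to $\varphi(1)$. (c) If $M$ is of bounded $xR$-torsion, then $H_1(x-U;M[[U]])=0$ and $H_0(x-U;M[[U]])\cong\hat{M}^{xR}$ (via the map in (a)).
   Context: $M[[U]]$ is the module of formal power series over $M$, an $R[U]$-module; $H_i(x-U;M[[U]])$ denotes the homology of the Koszul complex $0\to M[[U]]\xrightarrow{x-U}M[[U]]\to0$ (homological degrees $1,0$). $M$ is of bounded $xR$-torsion if there is $k$ with $0:_Mx^k=0:_Mx^{k+j}$ for all $j\ge0$. *)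

(* Defs.v *)
From HB Require Import structures.
From mathcomp Require Import all_boot all_order all_algebra.
Unset Printing Implicit Defensive.
Import GRing.Theory.
Local Open Scope ring_scope.

(* M[[U]] is modelled by coefficient sequences f : nat -> M, f = sum_i f i U^i. *)
Section Defs.
Variables (R : comPzRingType) (M : lmodType R) (x : R).

(* multiplication by (x - U) on M[[U]]: coefficient n is x f_n - f_{n-1} *)
Definition mulxU (f : nat -> M) : nat -> M :=
  fun n => x *: f n - (if n is n'.+1 then f n' else 0).

(* cycles of the Koszul complex, i.e. elements of H_1(x-U; M[[U]]) *)
Definition koszul_cycle (g : nat -> M) : Prop := forall n, mulxU g n = 0.

Definition in_xpowM (n : nat) (v : M) : Prop := exists m : M, v = x ^+ n *: m.

Definition adic_psum (f : nat -> M) (n : nat) : M := \sum_(i < n) x ^+ i *: f i.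

(* elements of lim_n M/x^nM, represented by sequences of representatives y n of
   classes in M/x^nM, compatible under the transition maps *)
Definition completion_elt (y : nat -> M) : Prop :=
  forall n, in_xpowM n (y n.+1 - y n).

(* equality in lim_n M/x^nM *)
Definition completion_eq (y z : nat -> M) : Prop :=
  forall n, in_xpowM n (y n - z n).

(* R_x = fractions r/x^n, with r/x^n = s/x^m iff x^k (x^m r - x^n s) = 0 *)
Definition loc_equiv (p q : R * nat) : Prop :=
  exists k, x ^+ k * (x ^+ q.2 * p.1 - x ^+ p.2 * q.1) = 0.

(* h : R_x -> M given on representatives (r, n) ~ r/x^n, R-linear *)
Definition is_hom_loc (h : R -> nat -> M) : Prop :=
  [/\ (forall r n s m, loc_equiv (r, n) (s, m) -> h r n = h s m),
      (forall r n s m, h (r * x ^+ m + s * x ^+ n) (n + m)%N = h r n + h s m)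
    & (forall a r n, h (a * r) n = a *: h r n)].

Definition bounded_torsion : Prop :=
  exists k : nat, forall (j : nat) (m : M), x ^+ k *: m = 0 <-> x ^+ (k + j) *: m = 0.

End Defs.

Arguments mulxU {R M} x f n.
Arguments koszul_cycle {R M} x g.
Arguments in_xpowM {R M} x n v.
Arguments adic_psum {R M} x f n.
Arguments completion_elt {R M} x y.
Arguments completion_eq {R M} x y z.
Arguments loc_equiv {R} x p q.
Arguments is_hom_loc {R M} x h.
Arguments bounded_torsion {R} M x.

(* Main.v *)
Require Import Defs.
From HB Require Import structures.
From mathcomp Require Import all_boot all_order all_algebra.
From mathcomp Require Import ring.
From Stdlib Require Import ClassicalEpsilon.
Import GRing.Theory.
Local Open Scope ring_scope.

Section H.
Variables (R : comPzRingType) (M : lmodType R) (x : R).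

Lemma psumS (f : nat -> M) n : adic_psum x f n.+1 = adic_psum x f n + x^+n *: f n.
Proof. by rewrite /adic_psum big_ord_recr. Qed.

Lemma psum0 (f : nat -> M) : adic_psum x f 0 = 0.
Proof. by rewrite /adic_psum big_ord0. Qed.

Lemma psum_mulxU (g : nat -> M) n : adic_psum x (mulxU x g) n.+1 = x^+n.+1 *: g n.
Proof.
elim: n => [|n IH]; first by rewrite psumS psum0 add0r /mulxU subr0 scale1r expr1.
rewrite psumS IH /mulxU scalerBr scalerA -exprSr addrC subrK //.
Qed.

Lemma mulxUB (u v : nat -> M) n : mulxU x (fun i => u i - v i) n = mulxU x u n - mulxU x v n.
Proof.
rewrite /mulxU scalerBr; case: n => [|n]; first by rewrite !subr0.
rewrite opprB addrACA opprD opprK addrACA [RHS]addrACA [v n + _]addrC. done. 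
Qed.

Definition GG (g : nat -> M) n : M := if n is n'.+1 then g n' else 0.

Lemma cycS (g : nat -> M) : koszul_cycle x g -> forall n, x *: GG g n.+1 = GG g n.
Proof. by move=> c n; move: (c n); rewrite /mulxU => /eqP; rewrite subr_eq0 => /eqP. Qed.

Lemma cycX (g : nat -> M) : koszul_cycle x g -> forall j n, x^+j *: GG g (n + j) = GG g n.
Proof.
move=> c; elim=> [|j IH] n; first by rewrite addn0 scale1r.
by rewrite exprSr -scalerA addnS cycS.
Qed.

End H.
Arguments GG {R M} g n.
Arguments cycS {R M x g}.
Arguments cycX {R M x g}.

Theorem lemma4p2 (R : comPzRingType) (M : lmodType R) (x : R) :
  ((forall f : nat -> M, completion_elt x (adic_psum x f)) /\
   (forall g : nat -> M, completion_eq x (adic_psum x (mulxU x g)) (fun _ : nat => (0 : M))) /\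
   (forall y : nat -> M, completion_elt x y ->
      exists f : nat -> M, completion_eq x (adic_psum x f) y)) /\
  (exists (Phi : (nat -> M) -> R -> nat -> M) (Psi : (R -> nat -> M) -> nat -> M),
     [/\ forall g : nat -> M, koszul_cycle x g -> is_hom_loc x (Phi g) /\ Phi g 1 0%N = 0,
         forall h : R -> nat -> M, is_hom_loc x h -> h 1 0%N = 0 -> koszul_cycle x (Psi h),
         forall g : nat -> M, koszul_cycle x g -> forall n, Psi (Phi g) n = g n,
         forall h : R -> nat -> M, is_hom_loc x h -> h 1 0%N = 0 ->
           forall r n, Phi (Psi h) r n = h r n
       & forall (a : R) (g g' : nat -> M), koszul_cycle x g -> koszul_cycle x g' ->
           forall r n, Phi (fun i => a *: g i + g' i) r n
                       = a *: Phi g r n + Phi g' r n]) /\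
  (bounded_torsion M x ->
     (forall g : nat -> M, koszul_cycle x g -> forall n, g n = 0) /\
     (forall f : nat -> M, completion_eq x (adic_psum x f) (fun _ : nat => (0 : M)) ->
        exists g : nat -> M, forall n, f n = mulxU x g n)).
Proof.
split; [split; [|split]|split].
- by move=> f n; exists (f n); rewrite psumS addrC addKr.
- move=> g [|n]; first by exists 0; rewrite psum0 subr0 scaler0.
  by exists (g n); rewrite psum_mulxU subr0.
- move=> y hy.
  pose m n := proj1_sig (constructive_indefinite_description _ (hy n)).
  have hm n : y n.+1 - y n = x ^+ n *: m n := proj2_sig (constructive_indefinite_description _ (hy n)).
  exists (fun n => if n is 0%N then y 1%N else m n).
  have E n : adic_psum x (fun n => if n is 0%N then y 1%N else m n) n.+1 = y n.+1.
    elim: n => [|n IH]; first by rewrite psumS psum0 add0r scale1r.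
    by rewrite psumS IH -hm addrC subrK.
  case=> [|n]; first by exists (- y 0%N); rewrite psum0 sub0r scale1r.
  by exists 0; rewrite E subrr scaler0.
- exists (fun g r n => r *: GG g n), (fun h n => h 1 n.+1).
  split.
  + move=> g c; split; last by rewrite scaler0.
    split.
    * move=> r n s m [k hk].
      rewrite -(cycX c (m + k) n) -(cycX c (n + k) m) !scalerA.
      have -> : (m + (n + k) = n + (m + k))%N by rewrite addnCA.
      apply/eqP; rewrite -subr_eq0 -scalerBl.
      have -> : r * x ^+ (m + k) - s * x ^+ (n + k) = x^+k * (x^+m * r - x^+n * s)
        by rewrite !exprD; ring.
      by rewrite hk scale0r.
    * move=> r n s m; rewrite scalerDl -!scalerA (cycX c).
      by rewrite addnC (cycX c).
    * by move=> a r n; rewrite scalerA.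
  + move=> h [h1 h2 h3] h10 n; rewrite /mulxU.
    have key k : x *: h 1 k.+1 = h 1 k.
      rewrite -h3 (h1 (x * 1) k.+1 1 k) //; exists 0%N.
      by rewrite expr0 mul1r mulr1 exprSr mulr1 subrr.
    by case: n => [|n]; rewrite key ?h10 subrr.
  + by move=> g c n /=; rewrite scale1r.
  + move=> h [h1 h2 h3] h10 r [|n] /=.
    * by rewrite scaler0 -[r]mulr1 h3 h10 scaler0.
    * by rewrite -h3 mulr1.
  + move=> a g g' c c' r [|n] /=; first by rewrite !scaler0 addr0.
    by rewrite scalerDr !scalerA mulrC.
- move=> [k hk].
  have tor (m : M) n : x ^+ n *: m = 0 -> x ^+ k *: m = 0.
    move=> e; case: (leqP n k) => nk.
      by rewrite -(subnK nk) exprD -scalerA e scaler0.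
    by apply/(hk (n - k)%N); rewrite subnKC // ltnW.
  split.
  + move=> g c n.
    have -> : g n = GG g n.+1 by [].
    rewrite -(cycX c k n.+1); apply: (tor _ (n.+1 + k)%N).
    by rewrite -[X in GG _ X]add0n (cycX c).
  + move=> f hf.
    pose a n := proj1_sig (constructive_indefinite_description _ (hf n)).
    have ha n : adic_psum x f n - 0 = x ^+ n *: a n := proj2_sig (constructive_indefinite_description _ (hf n)).
    have ha' n : adic_psum x f n = x ^+ n *: a n by rewrite -ha subr0.
    pose g' n := a n.+1.
    pose D n := mulxU x g' n - f n.
    have xD n : x ^+ n *: D n = 0.
      rewrite /D /mulxU /g' scalerBr scalerBr scalerA -exprSr -ha' psumS.
      case: n => [|n]; first by rewrite psum0 scaler0 !subr0 add0r subrr.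
      by rewrite -ha' addrAC addrK subrr.
    have kD n : x ^+ k *: D n = 0 by apply: (tor _ n).
    pose S n := \sum_(j < k) x ^+ j *: D (n + j)%N.
    have S0 : S 0%N = 0 by apply: big1 => j _; rewrite add0n xD.
    have SS n : x *: S n.+1 = S n - D n.
      have e1 : \sum_(j < k.+1) x ^+ j *: D (n + j)%N = D n + x *: S n.+1.
        rewrite big_ord_recl /= addn0 scale1r scaler_sumr; congr (_ + _).
        by apply: eq_bigr => j _; rewrite scalerA -exprS addnS addSn.
      have e2 : \sum_(j < k.+1) x ^+ j *: D (n + j)%N = S n.
        by rewrite big_ord_recr /= kD addr0.
      by apply/eqP; rewrite -e2 e1 addrC addKr.
    exists (fun i => g' i - - S i.+1) => n.
    rewrite mulxUB.
    have -> : mulxU x (fun i => - S i.+1) n = D n.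
      rewrite /mulxU scalerN SS; case: n => [|n]; first by rewrite subr0 S0 sub0r opprK.
      by rewrite opprB opprK subrK.
    by rewrite /D opprB addrC subrK.
Qed.
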